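(* Let $\mathcal{H}$ be a family of $h$ halfspaces in $\mathbb{R}^d$ and let $k$ be a positive integer. Suppose that for some positive integer $t$ there exists an integer $m$ with the following property: the $t$-tuples of every finite point set $S\subset\mathbb{R}^d$ can be $k$-colored such that every $\mathcal{H}$-region that contains at least $m$ points of $S$ contains a $t$-tuple of each of the $k$ colors. Then for every integer $t'>t$, with $m'=m+t'-t$, the $t'$-tuples of every finite point set $S\subset\mathbb{R}^d$ can be $k$-colored such that every $\mathcal{H}$-region that contains at least $m'$ points of $S$ contains a $t'$-tuple of each of the $k$ colors.
   Context: Given a finite family of halfspaces $\mathcal{H}=\{H_1,\dots,H_h\}$ in $\mathbb{R}^d$, a region $R$ is an $\mathcal{H}$-region if it is the intersection of finitely many halfspaces, each of which is a translate of one of the halfspaces in $\mathcal{H}$. A $t$-tuple of points of $S$ is an unordered $t$-element subset of $S$; a region contains it if it contains all its points. *)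

(* Defs.v *)
From HB Require Import structures.
From mathcomp Require Import all_boot all_order all_algebra.
From mathcomp Require Import finmap.
From mathcomp Require Import reals.
Set Implicit Arguments. Unset Strict Implicit. Unset Printing Implicit Defensive.
Import Order.TTheory GRing.Theory Num.Theory.
Local Open Scope ring_scope.
Local Open Scope fset_scope.

(* A halfspace of R^d: { x | <a,x> <= b } (closed) or { x | <a,x> < b } (open),
   with nonzero normal vector a. *)
Record halfspace (R : realType) (d : nat) := Halfspace {
  hs_normal : 'rV[R]_d;
  hs_strict : bool;
  hs_bound  : R }.

Definition dotv (R : realType) (d : nat) (a x : 'rV[R]_d) : R :=
  \sum_(j < d) a ord0 j * x ord0 j.

Definition in_hs (R : realType) (d : nat) (H : halfspace R d) (x : 'rV[R]_d) : bool :=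
  if hs_strict H then dotv (hs_normal H) x < hs_bound H
  else dotv (hs_normal H) x <= hs_bound H.

Definition proper_hs (R : realType) (d : nat) (H : halfspace R d) : Prop :=
  hs_normal H != 0.

(* An H-region is described by a finite list of pairs (i, v): the translate of
   the halfspace H_i by the vector v, i.e. { x | x - v \in H_i }; the region is
   the intersection of these translates. *)
Definition in_translate (R : realType) (d : nat) (H : halfspace R d)
  (v x : 'rV[R]_d) : bool := in_hs H (x - v).

Definition in_region (R : realType) (d h : nat) (Hs : 'I_h -> halfspace R d)
  (reg : seq ('I_h * 'rV[R]_d)) (x : 'rV[R]_d) : bool :=
  all (fun p => in_translate (Hs p.1) p.2 x) reg.

Definition pts_in (R : realType) (d h : nat) (Hs : 'I_h -> halfspace R d)
  (reg : seq ('I_h * 'rV[R]_d)) (S : {fset 'rV[R]_d}) : {fset 'rV[R]_d} :=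
  [fset x in S | in_region Hs reg x].

Definition good_coloring (R : realType) (d h : nat) (Hs : 'I_h -> halfspace R d)
  (k t : nat) (m : int) (S : {fset 'rV[R]_d}) (col : {fset 'rV[R]_d} -> 'I_k) : Prop :=
  forall reg : seq ('I_h * 'rV[R]_d),
    (m <= (#|` pts_in Hs reg S|)%:Z)%R ->
    forall c : 'I_k, exists T : {fset 'rV[R]_d},
      [/\ T `<=` S, #|` T| = t, {in T, forall x, in_region Hs reg x} & col T = c].

Definition coloring_property (R : realType) (d h : nat) (Hs : 'I_h -> halfspace R d)
  (k t : nat) (m : int) : Prop :=
  forall S : {fset 'rV[R]_d}, exists col : {fset 'rV[R]_d} -> 'I_k,
    @good_coloring R d h Hs k t m S col.

(* Main.v *)
Require Import Defs.
From mathcomp Require Import all_boot all_order all_algebra.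
From mathcomp Require Import finmap reals.
From mathcomp Require Import zify ring lra.
Set Implicit Arguments. Unset Strict Implicit. Unset Printing Implicit Defensive.
Import Order.TTheory GRing.Theory Num.Theory.
Local Open Scope fset_scope.
Local Open Scope ring_scope.

Section Helpers.
Variables (R : realType) (d : nat).
Implicit Types (a x y : 'rV[R]_d).

Lemma dotvD a x y : dotv a (x + y) = dotv a x + dotv a y.
Proof. by rewrite /dotv -big_split /=; apply eq_bigr => j _; rewrite mxE mulrDr. Qed.

Lemma dotvZ a (c : R) x : dotv a (c *: x) = c * dotv a x.
Proof. by rewrite /dotv mulr_sumr; apply eq_bigr => j _; rewrite mxE mulrCA. Qed.

Lemma dotvB a x y : dotv a (x - y) = dotv a x - dotv a y.
Proof. by rewrite /dotv -sumrB; apply eq_bigr => j _; rewrite !mxE mulrBr. Qed.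

Lemma dotv_self_gt0 a : a != 0 -> 0 < dotv a a.
Proof.
move=> an0; rewrite lt_def; apply/andP; split; last first.
  by apply: sumr_ge0 => j _; rewrite -expr2 sqr_ge0.
apply/negP => /eqP /psumr_eq0P H; move/eqP: an0; apply; apply/matrixP => i j.
rewrite (ord1 i) mxE; apply/eqP; rewrite -sqrf_eq0 expr2; apply/eqP.
by apply: H => // k _; rewrite -expr2 sqr_ge0.
Qed.

Lemma thr_translate (H : halfspace R d) (th : R) : hs_normal H != 0 ->
  exists v, forall y, (dotv (hs_normal H) y < th -> in_translate H v y) /\
                  (th < dotv (hs_normal H) y -> ~~ in_translate H v y).
Proof.
move=> an0; set a := hs_normal H; have aa := dotv_self_gt0 an0.
exists (((th - hs_bound H) / dotv a a) *: a) => y.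
have E : dotv a (y - ((th - hs_bound H) / dotv a a) *: a) = dotv a y - th + hs_bound H.
  by rewrite dotvB dotvZ divfK ?gt_eqF //; ring.
rewrite /in_translate /in_hs -/a E; case: (hs_strict H); split => Hy.
- lra.
- by rewrite -leNgt; lra.
- lra.
- by rewrite -ltNge; lra.
Qed.

Lemma sep_weak (A B : seq R) : (forall (u w : R), u \in A -> w \in B -> u < w) ->
  exists th : R, (forall u, u \in A -> u <= th) /\ (forall w, w \in B -> th < w).
Proof.
elim: A => [|a A IH] HAB.
  elim: B {HAB} => [|b B [th' [_ Hth]]]; first by exists 0.
  have [hb|hb] := leP b th'.
    exists (b - 1); split => // c; rewrite inE => /orP [/eqP->|/Hth]; lra.
  exists (th' - 1); split => // c; rewrite inE => /orP [/eqP->|/Hth]; lra.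
have [th' [H1 H2]] : exists th : R, (forall u, u \in A -> u <= th) /\ (forall w, w \in B -> th < w).
  by apply: IH => a' b ha hb; apply: HAB => //; rewrite inE ha orbT.
have ha : forall b, b \in B -> a < b by move=> b hb; apply: HAB => //; rewrite inE eqxx.
have [hh|hh] := leP a th'.
  exists th'; split => // c; rewrite inE => /orP [/eqP->|/H1] //.
exists a; split => [c|b hb]; last by have := H2 b hb; have := ha b hb; lra.
rewrite inE => /orP [/eqP->|/H1] //; lra.
Qed.

Lemma sep_strict (A B : seq R) : (forall (u w : R), u \in A -> w \in B -> u < w) ->
  exists th : R, (forall u, u \in A -> u < th) /\ (forall w, w \in B -> th < w).
Proof.
move=> HAB; have [t1 [H1 H2]] := sep_weak HAB.
have [t2 [H3 H4]] : exists th : R, (forall u, u \in map -%R B -> u <= th) /\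
                               (forall w, w \in map -%R A -> th < w).
  apply: sep_weak => u w /mapP [b hb ->] /mapP [a ha ->].
  by have := HAB a b ha hb; lra.
exists ((t1 - t2) / 2); split => [u hu|w hw].
  by have := H1 u hu; have := H4 (- u) (map_f _ hu); lra.
by have := H2 w hw; have := H3 (- w) (map_f _ hw); lra.
Qed.

Lemma seq_max (T : eqType) (f : T -> R) (l : seq T) : l != [::] ->
  exists2 z, z \in l & forall w, w \in l -> f w <= f z.
Proof.
elim: l => [//|a l IH] _.
case: (eqVneq l [::]) => [->|ln0].
  by exists a; rewrite ?inE // => w; rewrite inE => /eqP ->.
have [z zl Hz] := IH ln0.
have [hh|hh] := leP (f a) (f z).
  exists z; first by rewrite inE zl orbT.
  by move=> w; rewrite inE => /orP [/eqP->|/Hz].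
exists a; first by rewrite inE eqxx.
move=> w; rewrite inE => /orP [/eqP->|/Hz] //; lra.
Qed.

Lemma small_all (T : eqType) (l : seq T) (P : T -> R -> Prop) :
  (forall q, q \in l -> exists2 e : R, 0 < e & forall e', 0 < e' -> e' <= e -> P q e') ->
  exists2 e : R, 0 < e & forall q, q \in l -> forall e', 0 < e' -> e' <= e -> P q e'.
Proof.
elim: l => [|a l IH] H; first by exists 1 => //.
have [e1 e1p H1] := H a (mem_head _ _).
have [e2 e2p H2] := IH (fun b hb => H b (mem_behead (s:=a :: l) hb)).
have [hh|hh] := leP e1 e2.
  exists e1 => // b; rewrite inE => /orP [/eqP->|hb] e' e'p e'le.
    exact: H1.
  by apply: H2 => //; lra.
exists e2 => // b; rewrite inE => /orP [/eqP->|hb] e' e'p e'le.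
  by apply: H1 => //; lra.
exact: H2.
Qed.
End Helpers.

Section Main.
Variables (R : realType) (d h : nat) (Hs : 'I_h -> halfspace R d).

Lemma m_pos k t (m : int) : coloring_property Hs k t m -> (0 < k)%N -> (0 < t)%N -> 1 <= m.
Proof.
move=> Hp kp tp; rewrite leNgt; apply/negP => hm.
have [col Hc] := Hp fset0.
have [|T [T0 Tc _ _]] := Hc [::] _ (Ordinal kp); first by lia.
move: T0; rewrite fsubset0 => /eqP T0; move: Tc; rewrite T0 cardfs0; lia.
Qed.

Lemma pts_in_nil (S : {fset 'rV[R]_d}) : pts_in Hs [::] S = S.
Proof. by apply/fsetP => x; rewrite !inE /in_region /= andbT. Qed.

Lemma step_zero k t (m : int) : h = 0%N -> coloring_property Hs k t m -> (0 < k)%N -> (0 < t)%N ->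
  coloring_property Hs k t.+1 (m + 1).
Proof.
move=> h0 Hp kp tp S.
have m1 := m_pos Hp kp tp.
case: (fset_0Vmem S) => [->|[z hz]].
  exists (fun _ => Ordinal kp) => reg; rewrite /pts_in.
  have -> : [fset x in (fset0 : {fset 'rV[R]_d}) | in_region Hs reg x] = fset0.
    by apply/fsetP => x; rewrite !inE.
  rewrite cardfs0; lia.
have [col0 Hc] := Hp (S `\ z).
exists (fun T => col0 (T `\ z)) => reg.
have -> : reg = [::].
  case: reg => [//|p reg]; have := ltn_ord p.1; move: (nat_of_ord p.1) => n; move: h0 => /eqP; rewrite -leqn0 => h0 hn; exfalso; lia.
rewrite pts_in_nil => hm c.
have hS := cardfsD1 z S; rewrite hz /= in hS.
have [|T [TS Tc Tr Tcol]] := Hc [::] _ c.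
  rewrite pts_in_nil; move: hm; rewrite hS PoszD; set u := Posz #|` S `\ z|; lia.
have zT : z \notin T by apply/negP => /(fsubsetP TS); rewrite !inE eqxx.
exists (z |` T); split.
- apply/fsubsetP => x; rewrite !inE => /orP [/eqP->//|/(fsubsetP TS)].
  by rewrite !inE => /andP [].
- by rewrite cardfsU1 zT Tc.
- by move=> x _; rewrite /in_region.
- by rewrite fsetU1K.
Qed.

Lemma in_out (H : halfspace R d) v x y : in_translate H v x -> ~~ in_translate H v y ->
  dotv (hs_normal H) x < dotv (hs_normal H) y.
Proof.
rewrite /in_translate /in_hs !dotvB; case: (hs_strict H) => hx.
  by rewrite -leNgt => hy; lra.
by rewrite -ltNge => hy; lra.
Qed.

Lemma region_transfer (S : {fset 'rV[R]_d}) (psi : 'rV[R]_d -> 'rV[R]_d) :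
  (forall i, proper_hs (Hs i)) ->
  (forall i x y, x \in S -> y \in S -> dotv (hs_normal (Hs i)) x < dotv (hs_normal (Hs i)) y ->
     dotv (hs_normal (Hs i)) (psi x) < dotv (hs_normal (Hs i)) (psi y)) ->
  forall reg, exists reg', forall x, x \in S -> in_region Hs reg' (psi x) = in_region Hs reg x.
Proof.
move=> Hpr F2; elim => [|[i v] reg [reg' IH]]; first by exists [::].
pose A := [seq dotv (hs_normal (Hs i)) (psi x) | x <- enum_fset S & in_translate (Hs i) v x].
pose B := [seq dotv (hs_normal (Hs i)) (psi x) | x <- enum_fset S & ~~ in_translate (Hs i) v x].
have [th [H1 H2]] : exists th : R, (forall u, u \in A -> u < th) /\ (forall w, w \in B -> th < w).
  apply: sep_strict => u w /mapP [x + ->] /mapP [y + ->].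
  rewrite !mem_filter => /andP [hx xS] /andP [hy yS].
  by apply: F2 => //; apply: in_out hx hy.
have [v' Hv'] := thr_translate th (Hpr i).
exists ((i, v') :: reg') => x xS; rewrite /in_region /=.
have := IH x xS; rewrite /in_region => ->; congr (_ && _).
case: (boolP (in_translate (Hs i) v x)) => hx.
  by apply: (proj1 (Hv' _)); apply: H1; apply/mapP; exists x; rewrite // mem_filter hx xS.
apply/negbTE; apply: (proj2 (Hv' _)); apply: H2; apply/mapP; exists x => //; by rewrite mem_filter hx xS.
Qed.

Lemma small_sw (T : eqType) (l : seq T) (P : T -> R -> Prop) :
  (forall q, q \in l -> exists2 e : R, 0 < e & forall e', 0 < e' -> e' <= e -> P q e') ->
  exists2 e : R, 0 < e & forall e', 0 < e' -> e' <= e -> forall q, q \in l -> P q e'.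
Proof. by move=> /small_all [e ep He]; exists e => // e' h1 h2 q hq; apply: He. Qed.

Lemma perturb (S : {fset 'rV[R]_d}) (i0 : 'I_h) : (forall i, proper_hs (Hs i)) ->
  exists psi : 'rV[R]_d -> 'rV[R]_d,
  (forall i x y, x \in S -> y \in S -> dotv (hs_normal (Hs i)) x < dotv (hs_normal (Hs i)) y ->
     dotv (hs_normal (Hs i)) (psi x) < dotv (hs_normal (Hs i)) (psi y)) /\
  (forall x y, x \in S -> y \in S ->
     dotv (hs_normal (Hs i0)) (psi x) = dotv (hs_normal (Hs i0)) (psi y) -> x = y).
Proof.
move=> Hpr.
pose a i := hs_normal (Hs i).
pose a0 := a i0.
pose e i := dotv (a i) a0.
pose rk x : R := (index x (enum_fset S))%:R.
have [del delp Hdel] : exists2 del : R, 0 < del & forall i, i \in enum 'I_h ->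
    forall del', 0 < del' -> del' <= del -> forall x, x \in enum_fset S -> forall y, y \in enum_fset S ->
    dotv (a i) x < dotv (a i) y -> dotv (a i) x + del' * rk x * e i < dotv (a i) y + del' * rk y * e i.
  apply: small_all => i _.
  apply: small_sw => x _.
  apply: small_sw => y _.
  set dx := dotv (a i) x; set dy := dotv (a i) y.
  set c := rk x * e i - rk y * e i.
  have [hlt|hge] := ltP dx dy; last by exists 1 => // e' _ _ hh; lra.
  have cp : 0 < `|c| + 1 by have := normr_ge0 c; lra.
  exists ((dy - dx) / (`|c| + 1)); first by apply: divr_gt0 => //; lra.
  move=> e' e'p e'le _.
  have h1 : e' * c <= e' * `|c| by apply: ler_wpM2l; [lra | exact: ler_norm].
  have h2 : e' * `|c| <= (dy - dx) / (`|c| + 1) * `|c| by apply: ler_wpM2r => //; exact: normr_ge0.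
  have h3 : (dy - dx) / (`|c| + 1) * (`|c| + 1) = dy - dx by rewrite divfK // gt_eqF.
  have h4 : 0 < (dy - dx) / (`|c| + 1) by apply: divr_gt0 => //; lra.
  have h5 : e' * c = e' * rk x * e i - e' * rk y * e i by rewrite /c; ring.
  nra.
pose psi x := x + (del * rk x) *: a0.
have Hpsi i x : dotv (a i) (psi x) = dotv (a i) x + del * rk x * e i.
  by rewrite /psi dotvD dotvZ.
have F2 : forall i x y, x \in S -> y \in S -> dotv (a i) x < dotv (a i) y ->
     dotv (a i) (psi x) < dotv (a i) (psi y).
  move=> i x y xS yS hxy; rewrite !Hpsi; apply: (Hdel i) => //; by rewrite mem_enum.
exists psi; split; first exact: F2.
move=> x y xS yS; rewrite -/(a i0) -/a0.
have e0p : 0 < e i0 by apply: dotv_self_gt0; apply: Hpr.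
case: (ltgtP (dotv a0 x) (dotv a0 y)) => hxy.
- by have := F2 i0 x y xS yS hxy; rewrite -/a0 => h1 h2; move: h1; rewrite h2 ltxx.
- by have := F2 i0 y x yS xS hxy; rewrite -/a0 => h1 h2; move: h1; rewrite h2 ltxx.
rewrite !Hpsi -/a0 hxy => /addrI /(mulIf (lt0r_neq0 e0p)) /(mulfI (lt0r_neq0 delp)).
move/eqP; rewrite eqr_nat => /eqP E.
by rewrite -(nth_index x xS) E (nth_index x yS).
Qed.

Lemma in_sep (A : {fset 'rV[R]_d}) (p : pred 'rV[R]_d) x :
  (x \in [fset y in A | p y]) = (x \in A) && p x.
Proof. by rewrite inE. Qed.

Lemma step_pos k t (m : int) (i0 : 'I_h) : (forall i, proper_hs (Hs i)) ->
  coloring_property Hs k t m -> (0 < k)%N -> (0 < t)%N ->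
  coloring_property Hs k t.+1 (m + 1).
Proof.
move=> Hpr Hp kp tp S.
have m1 := m_pos Hp kp tp.
have [psi [F2 F1]] := perturb S i0 Hpr.
pose phi x := dotv (hs_normal (Hs i0)) (psi x).
have psi_inj : {in S &, injective psi}.
  by move=> x y xS yS E; apply: F1 => //; rewrite E.
pose Ss := psi @` S.
have [cols Hcs] := Hp Ss.
pose L (T' : {fset 'rV[R]_d}) := [fset x in T' | (#|` [fset y in T' | (phi y < phi x)%R]| < t)%N].
exists (fun T' => cols (psi @` L T')) => reg hm c.
have [reg' Hreg'] := region_transfer Hpr F2 reg.
set P := pts_in Hs reg S in hm.
have PS : P `<=` S by apply/fsubsetP => x; rewrite !inE => /andP [].
have Pn0 : enum_fset P != [::].
  apply/eqP => E; move: hm; rewrite E /=; lia.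
have [z zP Hz] := seq_max phi Pn0.
have zS : z \in S := fsubsetP PS z zP.
have Hlt : forall w, w \in P -> w != z -> phi w < phi z.
  move=> w wP wz; rewrite lt_def Hz // andbT; apply/negP => /eqP E.
  by move/eqP: wz; apply; apply: F1 => //; apply: (fsubsetP PS).
have [th [H1 H2]] : exists th : R, (forall u, u \in [seq phi w | w <- enum_fset (P `\ z)] -> u < th) /\
     (forall w, w \in [:: phi z] -> th < w).
  apply: sep_strict => u w /mapP [x xin ->] win.
  have : x \in P `\ z := xin; rewrite in_fsetD1 => /andP [xz xP].
  by move: win; rewrite mem_seq1 => /eqP ->; apply: Hlt.
have [v0 Hv0] := thr_translate th (Hpr i0).
pose reg2 := (i0, v0) :: reg'.
have sub2 : psi @` (P `\ z) `<=` pts_in Hs reg2 Ss.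
  apply/fsubsetP => y /imfsetP [x /= xin ->].
  have : x \in P `\ z := xin; rewrite in_fsetD1 => /andP [xz xP].
  have xS : x \in S := fsubsetP PS x xP.
  rewrite /pts_in !inE; apply/andP; split; first by apply/imfsetP; exists x.
  rewrite /in_region /=; apply/andP; split.
    by apply: (proj1 (Hv0 _)); apply: H1; apply/mapP; exists x => //; rewrite !inE xz.
  by have := Hreg' x xS; rewrite /in_region => ->; move: xP; rewrite !inE => /andP [].
have card2 : (#|` psi @` (P `\ z)| = #|` P `\ z|)%N.
  rewrite card_in_imfset //= => x y /(fsubsetP (fsubsetDl _ _)) xP /(fsubsetP (fsubsetDl _ _)) yP.
  by apply: psi_inj; apply: (fsubsetP PS).
have hcard := cardfsD1 z P; rewrite zP /= in hcard.
have hm2 : m <= (#|` pts_in Hs reg2 Ss|)%:Z.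
  have := fsubset_leq_card sub2; rewrite card2 => hle.
  move: hm; rewrite hcard PoszD; move: hle.
  set u1 := #|` P `\ z|; set u2 := #|` pts_in Hs reg2 Ss|; lia.
have [Ts [TsS Tsc Tsr Tscol]] := Hcs reg2 hm2 c.
pose T := [fset x in S | psi x \in Ts].
have ET : psi @` T = Ts.
  apply/fsetP => y; apply/imfsetP/idP => [[x /= + ->]|yT].
    by rewrite in_sep => /andP [].
  have := fsubsetP TsS y yT => /imfsetP [x /= xS E].
  by exists x => //; rewrite in_sep xS -E yT.
have TS : T `<=` S by apply/fsubsetP => x; rewrite in_sep => /andP [].
have Tc : #|` T| = t.
  rewrite -Tsc -ET; apply/esym; rewrite card_in_imfset //= => x y /(fsubsetP TS) xS /(fsubsetP TS) yS.
  exact: psi_inj.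
have TP : forall x, x \in T -> x \in P `\ z.
  move=> x; rewrite in_sep => /andP [xS xT].
  have := Tsr _ xT; rewrite /in_region /= => /andP [hcut hreg].
  move: hreg; rewrite -/(in_region Hs reg' (psi x)) (Hreg' x xS) => hreg.
  rewrite in_fsetD1; apply/andP; split; last by rewrite /P /pts_in in_sep xS hreg.
  apply/eqP => xz; move: hcut; rewrite xz; apply/negP/(proj2 (Hv0 _)).
  by apply: H2; rewrite mem_seq1.
have zT : z \notin T by apply/negP => /TP; rewrite in_fsetD1 eqxx.
have Hreg_of_P : forall x, x \in P -> in_region Hs reg x.
  by move=> x; rewrite /P /pts_in in_sep => /andP [].
exists (z |` T); split.
- apply/fsubsetP => x; rewrite in_fset1U => /orP [/eqP -> //|/(fsubsetP TS) //].
- by rewrite cardfsU1 zT Tc.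
- move=> x; rewrite in_fset1U => /orP [/eqP -> |/TP]; first exact: Hreg_of_P.
  by rewrite in_fsetD1 => /andP [_ /Hreg_of_P].
have LT : L (z |` T) = T.
  apply/fsetP => x; rewrite /L in_sep in_fset1U.
  case: (boolP (x \in T)) => xT.
    have xPz := TP x xT; move: (xPz); rewrite in_fsetD1 => /andP [xz xP].
    rewrite orbT /=.
    have sub : [fset y in z |` T | (phi y < phi x)%R] `<=` T `\ x.
      apply/fsubsetP => y; rewrite in_sep in_fset1U => /andP [/orP [/eqP -> | yT] hy].
        by have := Hlt x xP xz; rewrite ltNge (ltW hy).
      by rewrite in_fsetD1 yT andbT; apply/eqP => yx; move: hy; rewrite yx ltxx.
    have := fsubset_leq_card sub; have := cardfsD1 x T; rewrite xT Tc.
    by move=> -> hle; rewrite add1n ltnS.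
  case: (eqVneq x z) => [->|xz] /=; last by [].
  apply/negP; have sub : T `<=` [fset y in z |` T | (phi y < phi z)%R].
    apply/fsubsetP => y yT; rewrite in_sep in_fset1U yT orbT /=.
    have := TP y yT; rewrite in_fsetD1 => /andP [yz yP]; exact: Hlt.
  have := fsubset_leq_card sub; rewrite Tc.
  by move=> hle; rewrite ltnNge hle.
by rewrite LT ET.
Qed.

Lemma step k t (m : int) : (forall i, proper_hs (Hs i)) ->
  coloring_property Hs k t m -> (0 < k)%N -> (0 < t)%N ->
  coloring_property Hs k t.+1 (m + 1).
Proof.
move=> Hpr Hp kp tp; case: (posnP h) => [h0|hp].
  exact: step_zero.
exact: (step_pos (Ordinal hp)).
Qed.

Lemma iter_step k t (m : int) : (forall i, proper_hs (Hs i)) ->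
  coloring_property Hs k t m -> (0 < k)%N -> (0 < t)%N ->
  forall n, coloring_property Hs k (t + n) (m + n%:Z).
Proof.
move=> Hpr Hp kp tp; elim => [|n IH]; first by rewrite addn0 addr0.
have := step Hpr IH kp (leq_trans tp (leq_addr _ _)).
by rewrite addnS -addrA -PoszD addn1.
Qed.
End Main.

Theorem theorem7 (R : realType) (d h : nat) (Hs : 'I_h -> halfspace R d)
  (k t : nat) (m : int) :
  (forall i, proper_hs (Hs i)) ->
  (0 < k)%N -> (0 < t)%N ->
  @coloring_property R d h Hs k t m ->
  forall t' : nat, (t < t')%N ->
    @coloring_property R d h Hs k t' (m + t'%:Z - t%:Z).
Proof.
move=> Hpr kp tp Hp t' tt'.
have := iter_step Hpr Hp kp tp (t' - t).
rewrite subnKC ?(ltnW tt') // => H.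
have -> : m + t'%:Z - t%:Z = m + (t' - t)%N%:Z.
  by lia.
exact: H.
Qed.
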